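(* Let $n\ge p$ and $\mathcal X\in\mathrm{St}(n,p,l)$. The orthogonal projection (with respect to the inner product $\langle\mathcal A,\mathcal B\rangle=\sum_{i,j,k}a_{ijk}b_{ijk}$) from $\mathbb R^{n\times p\times l}$ onto the tangent space $T_{\mathcal X}\mathrm{St}(n,p,l)$ is given, for $\mathcal U\in\mathbb R^{n\times p\times l}$, by $$\mathbf P_{\mathcal X}(\mathcal U)=\mathcal U-\tfrac12\mathcal X*(\mathcal X^\top*\mathcal U+\mathcal U^\top*\mathcal X)=\mathcal U-\mathcal X*\operatorname{sym}(\mathcal X^\top*\mathcal U)=(\mathcal I-\mathcal X*\mathcal X^\top)*\mathcal U+\mathcal X*\operatorname{skew}(\mathcal X^\top*\mathcal U).$$
   Context: Frontal slices $A^{(i)}=\mathcal A(:,:,i)$. $\operatorname{bcirc}(\mathcal A)$ is the block circulant matrix with $(i,j)$ block $A^{(((i-j)\bmod l)+1)}$; $\operatorname{unfold}$ stacks the frontal slices vertically, $\operatorname{fold}$ is its inverse; the t-product is $\mathcal A*\mathcal B=\operatorname{fold}(\operatorname{bcirc}(\mathcal A)\operatorname{unfold}(\mathcal B))$. The transpose $\mathcal A^\top$ of $\mathcal A\in\mathbb R^{n\times p\times l}$ is the $p\times n\times l$ tensor with frontal slices $(A^{(1)})^\top,(A^{(l)})^\top,\dots,(A^{(2)})^\top$. $\mathcal I$ is the identity tensor (first frontal slice the identity matrix, others zero). $\mathrm{St}(n,p,l)=\{\mathcal X\in\mathbb R^{n\times p\times l}:\mathcal X^\top*\mathcal X=\mathcal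 I\}$, an embedded submanifold of $\mathbb R^{n\times p\times l}$, and $T_{\mathcal X}\mathrm{St}(n,p,l)$ its tangent space at $\mathcal X$ (a linear subspace of $\mathbb R^{n\times p\times l}$). $\operatorname{sym}(\mathcal A)=(\mathcal A+\mathcal A^\top)/2$, $\operatorname{skew}(\mathcal A)=(\mathcal A-\mathcal A^\top)/2$. *)

(* Defs.v *)
From HB Require Import structures.
From mathcomp Require Import all_boot all_order all_algebra.
From mathcomp Require Import all_classical all_reals all_analysis.
Set Implicit Arguments. Unset Strict Implicit. Unset Printing Implicit Defensive.
Import Order.TTheory GRing.Theory Num.Theory.
Local Open Scope ring_scope.

(* A third-order tensor in R^{n x p x l}: the family of its l frontal slices,
   indexed 0..l-1 (slice k here is A^{(k+1)} in the paper). *)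
Definition tensor (R : realType) (n p l : nat) := {ffun 'I_l -> 'M[R]_(n, p)}.

Lemma ord_pos (l : nat) (i : 'I_l) : (0 < l)%N.
Proof. by apply: leq_ltn_trans (ltn_ord i). Qed.

Definition tsub (l : nat) (i j : 'I_l) : 'I_l :=
  Ordinal (ltn_pmod (i + (l - j)) (ord_pos i)).

Definition tneg (l : nat) (k : 'I_l) : 'I_l :=
  Ordinal (ltn_pmod (l - k) (ord_pos k)).

(* t-product: fold(bcirc(A) unfold(B)); slice i = sum_j A^{(i-j mod l)} B^{(j)} *)
Definition tprod (R : realType) (n p q l : nat)
  (A : tensor R n p l) (B : tensor R p q l) : tensor R n q l :=
  [ffun i => \sum_(j < l) A (tsub i j) *m B j].

(* tensor transpose: slices A1^T, Al^T, ..., A2^T *)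
Definition ttr (R : realType) (n p l : nat) (A : tensor R n p l) : tensor R p n l :=
  [ffun k => (A (tneg k))^T].

Definition tid (R : realType) (n l : nat) : tensor R n n l :=
  [ffun k : 'I_l => if val k == 0%N then 1%:M else 0].

Definition tsym (R : realType) (n l : nat) (A : tensor R n n l) : tensor R n n l :=
  2^-1 *: (A + ttr A).
Definition tskew (R : realType) (n l : nat) (A : tensor R n n l) : tensor R n n l :=
  2^-1 *: (A - ttr A).

Definition tinner (R : realType) (n p l : nat) (A B : tensor R n p l) : R :=
  \sum_(k < l) \sum_(i < n) \sum_(j < p) A k i j * B k i j.

Definition tStiefel (R : realType) (n p l : nat) : set (tensor R n p l) :=
  [set X | tprod (ttr X) X = tid R p l].

Definition tangent_space (R : realType) (n p l : nat)
  (M : set (tensor R n p l)) (X : tensor R n p l) : set (tensor R n p l) :=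
  [set V : tensor R n p l | exists gamma : R -> tensor R n p l,
     [/\ gamma 0 = X, (forall t, M (gamma t)) &
         forall k i j, is_derive (0 : R) (1 : R) (fun t => gamma t k i j) (V k i j)]].

Definition is_orth_proj (R : realType) (n p l : nat)
  (S : set (tensor R n p l)) (P : tensor R n p l -> tensor R n p l) : Prop :=
  forall U, S (P U) /\ (forall V, S V -> tinner (U - P U) V = 0).

Arguments tStiefel R n p l : clear implicits.
Arguments tid R n l : clear implicits.

(* Main.v *)
Require Import Defs.
From HB Require Import structures.
From mathcomp Require Import all_boot all_order all_algebra.
From mathcomp Require Import all_classical all_reals all_analysis.
From mathcomp Require Import lra ring.
Import Order.TTheory GRing.Theory Num.Theory.
Import numFieldNormedType.Exports numFieldTopology.Exports.
Local Open Scope ring_scope.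
Set Implicit Arguments. Unset Strict Implicit. Unset Printing Implicit Defensive.

Lemma tsubE l' (i j : 'I_l'.+1) : tsub i j = (i - j)%R.
Proof.
apply/val_inj => /=.
by rewrite modnDmr.
Qed.

Lemma tnegE l' (k : 'I_l'.+1) : tneg k = (- k)%R.
Proof. by apply/val_inj. Qed.

Section Alg.
Variable R : realType.

Lemma tprodA n p q r l (A : tensor R n p l) (B : tensor R p q l) (C : tensor R q r l) :
  tprod A (tprod B C) = tprod (tprod A B) C.
Proof.
apply/ffunP => i; rewrite !ffunE.
case: l A B C i => [|l'] A B C i; first by case: i.
under eq_bigr => j _ do rewrite ffunE mulmx_sumr.
rewrite exchange_big /=.
apply: eq_bigr => m _; rewrite ffunE mulmx_suml.
rewrite [in LHS](reindex_inj (addIr m)) /=.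
apply: eq_bigr => j _; rewrite !tsubE addrK mulmxA.
by rewrite opprD addrA addrAC.
Qed.

Lemma ttrK n p l (A : tensor R n p l) : ttr (ttr A) = A.
Proof.
apply/ffunP => k; rewrite !ffunE trmxK.
case: l A k => [|l'] A k; first by case: k.
by rewrite !tnegE opprK.
Qed.

Lemma ttr_prod n p q l (A : tensor R n p l) (B : tensor R p q l) :
  ttr (tprod A B) = tprod (ttr B) (ttr A).
Proof.
apply/ffunP => k; rewrite !ffunE raddf_sum.
case: l A B k => [|l'] A B k; first by case: k.
rewrite (reindex_inj (addIr (- k))) /=.
apply: eq_bigr => j _; rewrite !ffunE trmx_mul !tsubE !tnegE.
by rewrite !opprB addKr.
Qed.

Lemma tid_prod n q l (A : tensor R n q l) : tprod (tid R n l) A = A.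
Proof.
apply/ffunP => i; rewrite !ffunE.
case: l A i => [|l'] A i; first by case: i.
rewrite (bigD1 i) //= big1 ?addr0.
  by rewrite ffunE tsubE subrr /= mul1mx.
move=> j ji; rewrite ffunE tsubE.
case: ifP => [/eqP h|_]; last by rewrite mul0mx.
exfalso; move/eqP: ji; apply.
have : (i - j)%R = 0 :> 'I_l'.+1 by apply/val_inj.
by move/eqP; rewrite subr_eq0 => /eqP.
Qed.

Lemma prod_tid n q l (A : tensor R n q l) : tprod A (tid R q l) = A.
Proof.
apply/ffunP => i; rewrite !ffunE.
case: l A i => [|l'] A i; first by case: i.
rewrite (bigD1 0) //= big1 ?addr0.
  by rewrite ffunE tsubE subr0 /= mulmx1.
move=> j ji; rewrite ffunE.
case: ifP => [/eqP h|_]; last by rewrite mulmx0.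
exfalso; move/eqP: ji; apply; by apply/val_inj.
Qed.

Lemma ttr_tid n l : ttr (tid R n l) = tid R n l.
Proof.
apply/ffunP => k; rewrite !ffunE.
case: l k => [|l'] k; first by case: k.
rewrite tnegE.
have -> : (val (- k) == 0%N) = (val k == 0%N).
  have e : forall x : 'I_l'.+1, (val x == 0%N) = (x == 0) by move=> x.
  by rewrite !e oppr_eq0.
by case: ifP => _; rewrite ?trmx1 ?trmx0.
Qed.

Lemma tprodDl n p q l (A B : tensor R n p l) (C : tensor R p q l) :
  tprod (A + B) C = tprod A C + tprod B C.
Proof.
apply/ffunP => i; rewrite !ffunE -big_split; apply: eq_bigr => j _.
by rewrite ffunE mulmxDl.
Qed.

Lemma tprodDr n p q l (A : tensor R n p l) (B C : tensor R p q l) :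
  tprod A (B + C) = tprod A B + tprod A C.
Proof.
apply/ffunP => i; rewrite !ffunE -big_split; apply: eq_bigr => j _.
by rewrite ffunE mulmxDr.
Qed.

Lemma tprodZl n p q l (a : R) (A : tensor R n p l) (C : tensor R p q l) :
  tprod (a *: A) C = a *: tprod A C.
Proof.
apply/ffunP => i; rewrite !ffunE scaler_sumr; apply: eq_bigr => j _.
by rewrite ffunE scalemxAl.
Qed.

Lemma tprodZr n p q l (a : R) (A : tensor R n p l) (C : tensor R p q l) :
  tprod A (a *: C) = a *: tprod A C.
Proof.
apply/ffunP => i; rewrite !ffunE scaler_sumr; apply: eq_bigr => j _.
by rewrite ffunE scalemxAr.
Qed.

Lemma tprodNl n p q l (A : tensor R n p l) (C : tensor R p q l) :
  tprod (- A) C = - tprod A C.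
Proof. by rewrite -scaleN1r tprodZl scaleN1r. Qed.

Lemma tprodNr n p q l (A : tensor R n p l) (C : tensor R p q l) :
  tprod A (- C) = - tprod A C.
Proof. by rewrite -scaleN1r tprodZr scaleN1r. Qed.

Lemma tprodBl n p q l (A B : tensor R n p l) (C : tensor R p q l) :
  tprod (A - B) C = tprod A C - tprod B C.
Proof. by rewrite tprodDl tprodNl. Qed.

Lemma tprodBr n p q l (A : tensor R n p l) (B C : tensor R p q l) :
  tprod A (B - C) = tprod A B - tprod A C.
Proof. by rewrite tprodDr tprodNr. Qed.

Lemma tprod0r n p q l (A : tensor R n p l) : tprod A (0 : tensor R p q l) = 0.
Proof. by rewrite -(scale0r (0 : tensor R p q l)) tprodZr scale0r. Qed.

Lemma ttrD n p l (A B : tensor R n p l) : ttr (A + B) = ttr A + ttr B.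
Proof. by apply/ffunP => k; rewrite !ffunE linearD. Qed.

Lemma ttrZ n p l a (A : tensor R n p l) : ttr (a *: A) = a *: ttr A.
Proof. by apply/ffunP => k; rewrite !ffunE linearZ. Qed.

Lemma ttrN n p l (A : tensor R n p l) : ttr (- A) = - ttr A.
Proof. by rewrite -scaleN1r ttrZ scaleN1r. Qed.

Lemma ttrB n p l (A B : tensor R n p l) : ttr (A - B) = ttr A - ttr B.
Proof. by rewrite ttrD ttrN. Qed.

End Alg.

Section Inner.
Variable R : realType.

Lemma tinnerE n p l (A B : tensor R n p l) :
  tinner A B = \sum_(k < l) \tr ((A k)^T *m B k).
Proof.
apply: eq_bigr => k _; rewrite /mxtrace.
under [RHS]eq_bigr => j _ do rewrite mxE.
rewrite exchange_big /=.
apply: eq_bigr => j _; apply: eq_bigr => i _.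
by rewrite !mxE.
Qed.

Lemma tinnerC n p l (A B : tensor R n p l) : tinner A B = tinner B A.
Proof. by apply: eq_bigr => k _; apply: eq_bigr => i _; apply: eq_bigr => j _; rewrite mulrC. Qed.

Lemma tinnerDl n p l (A B C : tensor R n p l) : tinner (A + B) C = tinner A C + tinner B C.
Proof.
rewrite /tinner -big_split; apply: eq_bigr => k _.
rewrite -big_split; apply: eq_bigr => i _.
rewrite -big_split; apply: eq_bigr => j _.
by rewrite !ffunE !mxE mulrDl.
Qed.

Lemma tinnerZl n p l a (A C : tensor R n p l) : tinner (a *: A) C = a * tinner A C.
Proof.
rewrite /tinner mulr_sumr; apply: eq_bigr => k _.
rewrite mulr_sumr; apply: eq_bigr => i _.
rewrite mulr_sumr; apply: eq_bigr => j _.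
by rewrite !ffunE !mxE mulrA.
Qed.

Lemma tinnerNl n p l (A C : tensor R n p l) : tinner (- A) C = - tinner A C.
Proof. by rewrite -scaleN1r tinnerZl mulN1r. Qed.

Lemma tinnerBl n p l (A B C : tensor R n p l) : tinner (A - B) C = tinner A C - tinner B C.
Proof. by rewrite tinnerDl tinnerNl. Qed.

Lemma tinnerDr n p l (A B C : tensor R n p l) : tinner C (A + B) = tinner C A + tinner C B.
Proof. by rewrite tinnerC tinnerDl !(tinnerC C). Qed.
Lemma tinnerZr n p l a (A C : tensor R n p l) : tinner C (a *: A) = a * tinner C A.
Proof. by rewrite tinnerC tinnerZl (tinnerC C). Qed.
Lemma tinnerNr n p l (A C : tensor R n p l) : tinner C (- A) = - tinner C A.
Proof. by rewrite tinnerC tinnerNl (tinnerC C). Qed.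
Lemma tinnerBr n p l (A B C : tensor R n p l) : tinner C (A - B) = tinner C A - tinner C B.
Proof. by rewrite tinnerDr tinnerNr. Qed.

Lemma tinner_ge0 n p l (A : tensor R n p l) : 0 <= tinner A A.
Proof.
by apply: sumr_ge0 => k _; apply: sumr_ge0 => i _; apply: sumr_ge0 => j _; rewrite -expr2 sqr_ge0.
Qed.

Lemma entry_le_tinner n p l (A : tensor R n p l) k i j : A k i j ^+ 2 <= tinner A A.
Proof.
rewrite /tinner (bigD1 k) //= -[X in X <= _]addr0 lerD //; last first.
  by apply: sumr_ge0 => k' _; apply: sumr_ge0 => i' _; apply: sumr_ge0 => j' _; rewrite -expr2 sqr_ge0.
rewrite (bigD1 i) //= -[X in X <= _]addr0 lerD //; last first.
  by apply: sumr_ge0 => i' _; apply: sumr_ge0 => j' _; rewrite -expr2 sqr_ge0.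
rewrite (bigD1 j) //= -[X in X <= _]addr0 lerD //; last first.
  by apply: sumr_ge0 => j' _; rewrite -expr2 sqr_ge0.
Qed.

Lemma tinner_eq0 n p l (A : tensor R n p l) : tinner A A = 0 -> A = 0.
Proof.
move=> h; apply/ffunP => k; apply/matrixP => i j; rewrite !ffunE !mxE.
have := entry_le_tinner A k i j; rewrite h => hle.
have : A k i j ^+ 2 = 0 by apply/le_anti; rewrite hle sqr_ge0.
by move/eqP; rewrite sqrf_eq0 => /eqP.
Qed.

Lemma tinner_tr n p l (A B : tensor R n p l) : tinner (ttr A) (ttr B) = tinner A B.
Proof.
rewrite !tinnerE.
case: l A B => [|l'] A B; first by rewrite !big_ord0.
rewrite (reindex_inj oppr_inj) /=.
apply: eq_bigr => k _; rewrite !ffunE !tnegE opprK trmxK mxtrace_mulC -mxtrace_tr trmx_mul trmxK.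
by [].
Qed.

Lemma tinner_adj n p q l (X : tensor R n p l) (S : tensor R p q l) (V : tensor R n q l) :
  tinner (tprod X S) V = tinner S (tprod (ttr X) V).
Proof.
rewrite !tinnerE.
case: l X S V => [|l'] X S V; first by rewrite !big_ord0.
under eq_bigr => k _ do rewrite ffunE raddf_sum mulmx_suml raddf_sum.
under [RHS]eq_bigr => k _ do rewrite ffunE mulmx_sumr raddf_sum.
rewrite exchange_big /=; apply: eq_bigr => j _; apply: eq_bigr => m _.
rewrite !ffunE !tsubE !tnegE opprB trmx_mul !mulmxA.
by [].
Qed.

Lemma tinner_skew n l (W : tensor R n n l) (T : tensor R n n l) :
  ttr W = - W -> tinner T (tprod W T) = 0.
Proof.
move=> hW.
have h : tinner (tprod W T) T = - tinner T (tprod W T).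
  by rewrite tinner_adj hW tprodNl tinnerNr.
rewrite tinnerC in h; lra.
Qed.

End Inner.
Unset Implicit Arguments. Set Strict Implicit.


Section Lmul.
Variables (R : realType) (n l : nat) (M : tensor R n n l).
Definition lmul : tensor R n n l -> tensor R n n l := fun T => tprod M T.
Lemma lmul_linear : linear lmul.
Proof. by move=> a u v; rewrite /lmul tprodDr tprodZr. Qed.
HB.instance Definition _ := GRing.isLinear.Build R (tensor R n n l) (tensor R n n l) *:%R lmul lmul_linear.
Definition lmulf := (@linfun R (tensor R n n l) (tensor R n n l) lmul).
Definition rinv : tensor R n n l := (lmulf^-1)%VF (tid R n l).

Lemma rinvP :
  (forall T : tensor R n n l, tprod M T = 0 -> T = 0) -> tprod M rinv = tid R n l.
Proof.
move=> inj.
have hk : lker lmulf == 0%VS.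
  apply/lker0P => x y; rewrite /lmulf !lfunE /= /lmul => e.
  apply/eqP; rewrite -subr_eq0; apply/eqP; apply: inj.
  by rewrite tprodBr e subrr.
have := lker0_lfunVK hk (tid R n l).
by rewrite /lmulf lfunE.
Qed.
End Lmul.

Lemma rinv_l (R : realType) n l (M Y : tensor R n n l) :
  tprod M Y = tid R n l -> tprod Y M = tid R n l.
Proof.
move=> hMY.
have injY : forall T : tensor R n n l, tprod Y T = 0 -> T = 0.
  move=> T hT; rewrite -(tid_prod T) -hMY -tprodA hT.
  by rewrite tprod0r.
have h := @rinvP R n l Y injY.
suff -> : M = @rinv R n l Y by [].
by rewrite -[M]prod_tid -h tprodA hMY tid_prod.
Qed.
Section DQ.
Local Open Scope classical_set_scope.

Lemma deriv_quad (R : realType) (f e : R -> R) (a v B : R) :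
  (forall t, f t = a + t * v + t ^+ 2 * e t) -> (forall t, `|e t| <= B) ->
  is_derive (0:R) (1:R) f v.
Proof.
move=> hf he.
have B0 : 0 <= B by apply: le_trans (he 0); exact: normr_ge0.
have hz : (fun h : R => h * e h) @ (0:R)^' --> (0:R).
  apply/cvgr0Pnorm_lt => eps eps0.
  have d0 : 0 < eps / (B + 1) by apply: divr_gt0 => //; lra.
  near=> h.
  have hh : `|h| < eps / (B + 1) by near: h; exact: dnbhs0_lt.
  rewrite normrM.
  have h1 : `|h| * `|e h| <= `|h| * B by apply: ler_wpM2l => //; exact: normr_ge0.
  apply: le_lt_trans h1 _.
  have : `|h| * (B + 1) < eps by rewrite -ltr_pdivlMr //; lra.
  have : 0 <= `|h| by exact: normr_ge0.
  nra.
have hq : (fun h : R => h^-1 *: ((f \o shift 0) (h *: 1) - f 0)) @ (0:R)^' --> v.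
  have hz' : (fun h : R => v + h * e h) @ (0:R)^' --> v.
    have := cvgD (cvg_cst v) hz; rewrite addr0. move=> H. apply: H.
  apply: cvg_trans hz'.
  apply: near_eq_cvg; near=> h.
  have hn0 : h != 0 by near: h; exact: nbhs_dnbhs_neq.
  rewrite /= !hf.
  have eh : h%:A = h :> R by rewrite /GRing.scale /= mulr1.
  rewrite eh addr0 mul0r expr0n /= mul0r !addr0 /GRing.scale /=.
  by field.
split.
  by apply/cvg_ex; exists v.
exact: cvg_lim hq.
Unshelve. all: by end_near.
Qed.

End DQ.

Section Der.
Variable R : realType.

Lemma is_derive_sum_pt m (h : 'I_m -> R -> R) (dh : 'I_m -> R) :
  (forall i, is_derive (0:R) (1:R) (h i) (dh i)) ->
  is_derive (0:R) (1:R) (fun t => \sum_(i < m) h i t) (\sum_(i < m) dh i).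
Proof.
move=> H; have := is_derive_sum H.
by rewrite fct_sumE.
Qed.

Lemma is_deriveM_pt (f g : R -> R) (df dg : R) :
  is_derive (0:R) (1:R) f df -> is_derive (0:R) (1:R) g dg ->
  is_derive (0:R) (1:R) (fun t => f t * g t) (f 0 * dg + g 0 * df).
Proof. by move=> hf hg; have := is_deriveM hf hg. Qed.

Lemma tprod_entry n p q l (A : tensor R n p l) (B : tensor R p q l) k a b :
  tprod A B k a b = \sum_(j < l) \sum_(c < p) A (tsub k j) a c * B j c b.
Proof. by rewrite ffunE summxE; apply: eq_bigr => j _; rewrite mxE. Qed.

Lemma ttr_entry n p l (A : tensor R n p l) k a b : ttr A k a b = A (tneg k) b a.
Proof. by rewrite ffunE mxE. Qed.

Lemma tangent_skew n p l (X V : tensor R n p l) :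
  tStiefel R n p l X ->
  tangent_space (tStiefel R n p l) X V ->
  tprod (ttr X) V + tprod (ttr V) X = 0.
Proof.
move=> hX [g [g0 gS gd]].
apply/ffunP => k; apply/matrixP => a b.
have -> : (tprod (ttr X) V + tprod (ttr V) X) k a b = tprod (ttr X) V k a b + tprod (ttr V) X k a b by rewrite ffunE mxE.
have -> : (0 : tensor R p p l) k a b = 0 by rewrite ffunE mxE.
set F := fun t => \sum_(j < l) \sum_(c < n) g t (tneg (tsub k j)) c a * g t j c b.
have HF : is_derive (0:R) (1:R) F
   (\sum_(j < l) \sum_(c < n) (X (tneg (tsub k j)) c a * V j c b + X j c b * V (tneg (tsub k j)) c a)).
  apply: is_derive_sum_pt => j; apply: is_derive_sum_pt => c.
  have := is_deriveM_pt _ _ _ _ (gd (tneg (tsub k j)) c a) (gd j c b).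
  by rewrite g0.
have Fc : F = cst (tid R p l k a b).
  apply/funext => t; rewrite /F /= -(gS t) tprod_entry.
  by apply: eq_bigr => j _; apply: eq_bigr => c _; rewrite ttr_entry.
rewrite Fc in HF.
have e1 := @derive_val _ _ _ _ _ _ _ HF.
have e2 := @derive_val _ _ _ _ _ _ _ (is_derive_cst (tid R p l k a b) (0:R) (1:R)).
rewrite e2 in e1.
rewrite !tprod_entry [RHS]e1 -big_split; apply: eq_bigr => j _ /=.
rewrite -big_split; apply: eq_bigr => c _ /=.
by rewrite !ttr_entry [X in _ + X]mulrC.
Qed.

End Der.

Ltac tnorm := rewrite ?(ttrB, ttrD, ttrZ, ttrN, ttr_prod, ttrK, ttr_tid, tprodBl, tprodBr, tprodDl, tprodDr, tprodZl, tprodZr, tprodNl, tprodNr, tid_prod, prod_tid); rewrite -?tprodA.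

Ltac close_lin := apply/ffunP => ?; apply/matrixP => ? ?; rewrite !ffunE !mxE; lra.

Section Cay.
Variable R : realType.

Lemma abs_le_1sq (y : R) : `|y| <= 1 + y ^+ 2.
Proof. rewrite -real_normK ?num_real //; have := normr_ge0 y; nra. Qed.

Lemma entry_bound n p l (A : tensor R n p l) k i j : `|A k i j| <= 1 + tinner A A.
Proof. apply: le_trans (abs_le_1sq _) _; rewrite lerD2l; exact: entry_le_tinner. Qed.

Lemma tprod_bound n p q l (A : tensor R n p l) (B : tensor R p q l) a b :
  (forall k i j, `|A k i j| <= a) -> (forall k i j, `|B k i j| <= b) ->
  forall k i j, `|tprod A B k i j| <= (l * p)%:R * (a * b).
Proof.
move=> hA hB k i j; rewrite tprod_entry.
apply: le_trans (ler_norm_sum _ _ _) _.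
apply: (@le_trans _ _ (\sum_(m < l) \sum_(c < p) (a * b))).
  apply: ler_sum => m _; apply: le_trans (ler_norm_sum _ _ _) _.
  apply: ler_sum => c _; rewrite normrM; apply: ler_pM => //; exact: normr_ge0.
by rewrite !sumr_const !card_ord -mulrnA mulr_natl mulnC.
Qed.

Arguments entry_bound {n p l}.
Arguments tprod_bound {n p q l A B a b}.

Variables (n p l : nat) (X : tensor R n p l) (hX : tprod (ttr X) X = tid R p l).
Variables (V : tensor R n p l) (hV : tprod (ttr X) V + tprod (ttr V) X = 0).

Definition cK := tprod (ttr X) V.
Definition cB := tprod V (ttr X) - 2^-1 *: tprod X (tprod cK (ttr X)).
Definition cW := cB - ttr cB.

Lemma hVX : tprod (ttr V) X = - cK.
Proof. by apply/eqP; rewrite -addr_eq0 addrC /cK hV eqxx. Qed.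

Lemma hKt : ttr cK = - cK.
Proof. by rewrite /cK ttr_prod ttrK hVX. Qed.

Lemma cWskew : ttr cW = - cW.
Proof. by rewrite /cW ttrB ttrK [RHS]opprB. Qed.

Lemma cWX : tprod cW X = V.
Proof.
rewrite /cW /cB.
tnorm.
rewrite ?hX ?hKt ?hVX.
tnorm.
rewrite -/cK hVX tprodNr; move: (tprod X cK) => a.
close_lin.
Qed.

Ltac close_ring := apply/ffunP => ?; apply/matrixP => ? ?; rewrite !ffunE !mxE; ring.

Lemma tinner0r m q (T : tensor R m q l) : tinner T 0 = 0.
Proof. by rewrite -(scale0r (0 : tensor R m q l)) tinnerZr mul0r. Qed.

Definition cC (s : R) := tid R n l - s *: cW.
Definition cD (s : R) := tid R n l + s *: cW.

Lemma cC_inj s : forall T : tensor R n n l, tprod (cC s) T = 0 -> T = 0.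
Proof.
move=> T hT; apply: tinner_eq0.
have := congr1 (tinner T) hT.
rewrite /cC tprodBl tid_prod tprodZl tinnerBr tinnerZr (tinner_skew T cWskew) mulr0 subr0 => ->.
exact: tinner0r.
Qed.

Definition cY s := @rinv R n l (cC s).

Lemma cCY s : tprod (cC s) (cY s) = tid R n l.
Proof. exact: rinvP (cC_inj s). Qed.

Lemma cYC s : tprod (cY s) (cC s) = tid R n l.
Proof. exact: rinv_l (cCY s). Qed.

Lemma comm_gen (M : tensor R n n l) a : tprod M (a *: tid R n l - M) = tprod (a *: tid R n l - M) M.
Proof. by rewrite tprodBr tprodBl tprodZr tprodZl prod_tid tid_prod. Qed.

Lemma cD_eq s : cD s = 2 *: tid R n l - cC s.
Proof. rewrite /cD /cC; move: cW (tid R n l) => w u; close_lin. Qed.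

Lemma cCD s : tprod (cC s) (cD s) = tprod (cD s) (cC s).
Proof. by rewrite cD_eq comm_gen. Qed.

Lemma cYD s q (Z : tensor R n q l) :
  tprod (cY s) (tprod (cD s) Z) = tprod (cD s) (tprod (cY s) Z).
Proof.
have e : tprod (cY s) (cD s) = tprod (cD s) (cY s).
  have -> : tprod (cY s) (cD s) = tprod (tprod (cY s) (cD s)) (tprod (cC s) (cY s)).
    by rewrite cCY prod_tid.
  by rewrite tprodA -(tprodA (cY s) (cD s)) -cCD tprodA cYC tid_prod.
by rewrite tprodA e -tprodA.
Qed.

Definition cg (t : R) := tprod (cY (t / 2)) (tprod (cD (t / 2)) X).

Lemma cg0 : cg 0 = X.
Proof.
rewrite /cg mul0r.
have hC : cC 0 = tid R n l by rewrite /cC scale0r subr0.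
have := cCY 0; rewrite hC tid_prod => ->.
by rewrite /cD scale0r addr0 !tid_prod.
Qed.

Lemma cDt s : ttr (cD s) = cC s.
Proof. by rewrite /cD /cC ttrD ttr_tid ttrZ cWskew scalerN. Qed.

Lemma cCt s : ttr (cC s) = cD s.
Proof. by rewrite /cD /cC ttrB ttr_tid ttrZ cWskew scalerN opprK. Qed.

Lemma cgSt t : tStiefel R n p l (cg t).
Proof.
rewrite /tStiefel /= /cg.
set s := t / 2.
have hYtD : tprod (ttr (cY s)) (cD s) = tid R n l.
  by have := congr1 (@ttr R n n l) (cCY s); rewrite ttr_prod cCt ttr_tid.
rewrite !ttr_prod cDt cYD -!tprodA.
rewrite (tprodA (ttr (cY s)) (cD s)) hYtD tid_prod.
by rewrite (tprodA (cC s)) cCY tid_prod hX.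
Qed.

Lemma cg_expand t : cg t = X + t *: V + (t ^+ 2) *: (2^-1 *: tprod cW (tprod (cY (t/2)) V)).
Proof.
set s := t / 2.
have hD : cD s = cC s + t *: cW.
  rewrite /cD /cC /s; move: cW (tid R n l) => w u; close_lin.
have hY : cY s = tid R n l + s *: tprod cW (cY s).
  have := cCY s; rewrite /cC tprodBl tid_prod tprodZl => <-.
  move: (cY s) (tprod cW (cY s)) => y z; close_lin.
rewrite /cg -/s hD tprodDl tprodDr tprodA cYC tid_prod tprodZl tprodZr cWX.
rewrite [in LHS]hY tprodDl tid_prod tprodZl -tprodA.
rewrite /s; move: (tprod cW (tprod (cY (t / 2)) V)) => w; close_ring.
Qed.

Lemma cY_bound s k i j : `|cY s k i j| <= 1 + tinner (tid R n l) (tid R n l).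
Proof.
apply: le_trans (entry_bound (cY s) k i j) _; rewrite lerD2l.
rewrite -(cCY s) /cC tprodBl tid_prod tprodZl.
rewrite !(tinnerBl, tinnerBr, tinnerZl, tinnerZr).
rewrite (tinnerC (tprod cW (cY s)) (cY s)) (tinner_skew (cY s) cWskew).
have := tinner_ge0 (tprod cW (cY s)); nra.
Qed.

Lemma entry_lin m q (A1 B1 C1 : tensor R m q l) a b k i j :
  (A1 + a *: B1 + b *: C1) k i j = A1 k i j + a * B1 k i j + b * C1 k i j.
Proof. by rewrite !ffunE !mxE. Qed.

Lemma cg_deriv k i j : is_derive (0:R) (1:R) (fun t => cg t k i j) (V k i j).
Proof.
set Bd := (l * n)%:R * ((1 + tinner cW cW) * ((l * n)%:R * ((1 + tinner (tid R n l) (tid R n l)) * (1 + tinner V V)))).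
apply: (@deriv_quad R _ (fun t => (2^-1 *: tprod cW (tprod (cY (t/2)) V)) k i j) (X k i j) (V k i j) Bd).
  by move=> t; rewrite cg_expand entry_lin.
move=> t.
have h1 := tprod_bound (fun k i j => cY_bound (t/2) k i j) (fun k i j => entry_bound V k i j).
have h2 := tprod_bound (fun k i j => entry_bound cW k i j) h1 k i j.
have -> : (2^-1 *: tprod cW (tprod (cY (t / 2)) V)) k i j = 2^-1 * (tprod cW (tprod (cY (t / 2)) V)) k i j.
  by rewrite ffunE mxE.
move: h2; rewrite normrM ger0_norm; last by lra.
move: (tprod cW (tprod (cY (t / 2)) V) k i j) => x hx.
have := normr_ge0 x; rewrite /Bd; lra.
Qed.

Lemma tangent_of_skew : tangent_space (tStiefel R n p l) X V.
Proof. exists cg; split; [exact: cg0 | exact: cgSt | exact: cg_deriv]. Qed.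

End Cay.


Theorem mainTheorem3 (R : realType) (n p l : nat) (hnp : (p <= n)%N)
  (X : tensor R n p l) (hX : tStiefel R n p l X) :
  let P := fun U : tensor R n p l =>
    U - 2^-1 *: tprod X (tprod (ttr X) U + tprod (ttr U) X) in
  is_orth_proj (tangent_space (tStiefel R n p l) X) P /\
  (forall U : tensor R n p l,
     P U = U - tprod X (tsym (tprod (ttr X) U)) /\
     P U = tprod (tid R n l - tprod X (ttr X)) U + tprod X (tskew (tprod (ttr X) U))).
Proof.
move=> P.
have hX' : tprod (ttr X) X = tid R p l := hX.
have hXX : forall q (Z : tensor R p q l), tprod (ttr X) (tprod X Z) = Z.
  by move=> q Z; rewrite tprodA hX' tid_prod.
split; last first.
  move=> U; split.
    by rewrite /P /tsym tprodZr ttr_prod ttrK.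
  rewrite /P /tskew; tnorm.
  move: (tprod X (tprod (ttr X) U)) (tprod X (tprod (ttr U) X)) => a b; close_lin.
move=> U; split.
  apply: (@tangent_of_skew R n p l X hX').
  rewrite /P; tnorm; rewrite ?hXX ?hX' ?prod_tid ?tid_prod.
  move: (tprod (ttr X) U) (tprod (ttr U) X) => a b; close_lin.
move=> V hV.
have hs := @tangent_skew R n p l X V hX hV.
rewrite /P subKr tinnerZl tinner_adj.
set S := tprod (ttr X) U + tprod (ttr U) X.
set K := tprod (ttr X) V.
have hS : ttr S = S by rewrite /S ttrD !ttr_prod !ttrK addrC.
have hK : ttr K = - K.
  rewrite /K ttr_prod ttrK; apply/eqP; rewrite -addr_eq0 addrC hs eqxx //.
have := tinner_tr S K; rewrite hS hK tinnerNr => h.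
lra.
Qed.
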